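(* For every $n\geq2$ and $c\geq1$, $|UD_n((1,1,c))|=n(n-1)(n^c-2^c)$.
   Context: Let $X$ be a finite alphabet with $n\geq 2$ letters and $X^*$ the set of words over $X$; $|v|$ is the length of a word $v$. A code over $X$ is a finite sequence $C=(v_1,\ldots,v_m)$ of words over $X$ such that every $w\in X^*$ has at most one factorization into code-words: if $w=v_{i_1}\cdots v_{i_l}=v_{j_1}\cdots v_{j_{l'}}$ with $l,l'\geq1$, then $l=l'$ and $i_t=j_t$ for all $t$. (Codes are sequences, not sets.) For a finite sequence $L=(a_1,\ldots,a_m)$ of positive integers, $UD_n(L)$ is the set of all codes $(v_1,\ldots,v_m)$ over an $n$-letter alphabet with $|v_i|=a_i$ for all $i$. *)

(* Defs.v *)
From mathcomp Require Import all_boot.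
Set Implicit Arguments. Unset Strict Implicit. Unset Printing Implicit Defensive.

Definition word (n : nat) := seq 'I_n.

Definition is_code (n : nat) (C : seq (word n)) : Prop :=
  forall ix jx : seq nat,
    ix != [::] -> jx != [::] ->
    all (fun i => i < size C) ix -> all (fun j => j < size C) jx ->
    flatten (map (nth [::] C) ix) = flatten (map (nth [::] C) jx) ->
    ix = jx.

Definition UD (n : nat) (L : seq nat) (C : seq (word n)) : Prop :=
  map size C = L /\ is_code C.

(* Main.v *)
Require Import Defs.
From mathcomp Require Import all_boot.
Set Implicit Arguments. Unset Strict Implicit. Unset Printing Implicit Defensive.

Lemma cat_injl (T : Type) (s t1 t2 : seq T) : s ++ t1 = s ++ t2 -> t1 = t2.
Proof. by elim: s => //= x s IH [] /IH. Qed.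

Lemma decomp (T : eqType) (P : pred T) (w : seq T) : ~~ all P w ->
  exists u x v, [/\ w = u ++ x :: v, all P u & ~~ P x].
Proof.
elim: w => //= y w IH.
case Py: (P y) => /= H.
  have [u [x [v [-> Hu Hx]]]] := IH H.
  by exists (y :: u), x, v; rewrite /= Py.
by exists [::], y, w; rewrite Py.
Qed.

Section Code.
Variables (n : nat) (a b : 'I_n).

Lemma nth_ab (p : word n) i : all (mem [:: a; b]) p -> nth a p i \in [:: a; b].
Proof.
move=> Hp; case: (ltnP i (size p)) => H.
  exact: (allP Hp) _ (mem_nth a H).
by rewrite nth_default // mem_head.
Qed.

Variables (u v : word n) (x : 'I_n).
Hypotheses (Hu : all (mem [:: a; b]) u) (Hx : x \notin [:: a; b]).
Let C := [:: [:: a]; [:: b]; u ++ x :: v].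
Let F ix := flatten (map (nth [::] C) ix).

Lemma key ix : all (fun i => i < 3) ix -> forall p : word n, p != [::] ->
  all (mem [:: a; b]) p -> nth a (p ++ F ix) (size u) != x.
Proof.
elim: ix => [|i ix IH] /=.
  move=> _ p _ Hp; rewrite cats0.
  by apply: contraTneq (nth_ab (size u) Hp) => ->.
move=> /andP[Hi Hix] p Hp0 Hp.
case: i Hi => [|[|[|i]]] // _.
- rewrite /= -cat_rcons; apply: IH => //; first by case: (p).
  rewrite all_rcons Hp andbT; exact: mem_head.
- rewrite /F /= -cat_rcons; apply: IH => //; first by case: (p).
  have Hb : b \in [:: a; b] by rewrite !inE eqxx orbT.
  by rewrite all_rcons Hp andbT.
- rewrite /F /= nth_cat; case: ltnP => H.
    by apply: contraTneq (nth_ab (size u) Hp) => ->.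
  rewrite -catA nth_cat.
  have Hp1 : 0 < size p by case: (p) Hp0.
  have -> : size u - size p < size u.
    by rewrite ltn_subrL Hp1 (leq_trans Hp1 H).
  by apply: contraTneq (nth_ab (size u - size p) Hu) => ->.
Qed.

Lemma noW l ix jx : l \in [:: a; b] -> all (fun i => i < 3) ix ->
  l :: F ix <> (u ++ x :: v) ++ F jx.
Proof.
move=> Hl Hix E.
have := key Hix (p := [:: l]) isT; rewrite /= Hl => /(_ isT).
rewrite E -catA nth_cat ltnNge leqnn /= subnn /=.
by rewrite eqxx.
Qed.

Lemma code3 : a != b -> is_code C.
Proof.
move=> Hab.
have Hb : b \in [:: a; b] by rewrite !inE eqxx orbT.
have Hw : forall t, [::] <> (u ++ x :: v) ++ t by case: (u).
suff S : forall ix jx, all (fun i => i < 3) ix -> all (fun i => i < 3) jx ->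
  F ix = F jx -> ix = jx.
  by move=> ix jx _ _; apply: S.
rewrite /F; elim=> [|i ix IH] [|j jx] //=.
- move=> _ /andP[Hj _]; case: j Hj => [|[|[|j]]] //= _.
  by move/Hw.
- move=> /andP[Hi _] _; case: i Hi => [|[|[|i]]] //= _.
  by move/esym/Hw.
move=> /andP[Hi Hix] /andP[Hj Hjx].
case: i Hi => [|[|[|i]]] // _; case: j Hj => [|[|[|j]]] // _ /= E.
- by case: E => /(IH _ Hix Hjx) ->.
- by case: E => Eab; rewrite Eab eqxx in Hab.
- by case: (noW (mem_head _ _) Hix E).
- by case: E => Eab; rewrite Eab eqxx in Hab.
- by case: E => /(IH _ Hix Hjx) ->.
- by case: (noW (l := b) Hb Hix E).
- by case: (noW (mem_head _ _) Hjx (esym E)).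
- by case: (noW (l := b) Hb Hjx (esym E)).
- by move/cat_injl: E => /(IH _ Hix Hjx) ->.
Qed.
End Code.

Lemma uniq_flat (S T : eqType) (f : S -> seq T) (xs : seq S) :
  (forall x y e, e \in f x -> e \in f y -> x = y) -> uniq xs ->
  (forall x, uniq (f x)) -> uniq (flatten (map f xs)).
Proof.
move=> Hk; elim: xs => //= x xs IH /andP[Hx Hxs] Hf.
rewrite cat_uniq Hf IH // andbT /=.
apply/hasPn => e /flatten_mapP [y Hy He] ; apply/negP => He'.
by move: Hx; rewrite (Hk _ _ _ He' He) Hy.
Qed.

Lemma size_flat (S : eqType) (T : Type) (f : S -> seq T) (xs : seq S) K :
  (forall x, x \in xs -> size (f x) = K) -> size (flatten (map f xs)) = size xs * K.
Proof.
elim: xs => //= x xs IH H.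
rewrite size_cat H ?mem_head // IH // => y Hy.
by apply: H; rewrite inE Hy orbT.
Qed.

Fixpoint words n k : seq (word n) :=
  if k is k'.+1 then flatten [seq [seq y :: w | w <- words n k'] | y <- enum 'I_n]
  else [:: [::]].

Lemma words_uniq n k : uniq (words n k).
Proof.
elim: k => //= k IH.
apply: uniq_flat; last first.
- by move=> y; rewrite map_inj_uniq // => w1 w2 [].
- exact: enum_uniq.
by move=> y z e /mapP [w1 _ ->] /mapP [w2 _ []].
Qed.

Lemma words_size n k : size (words n k) = n ^ k.
Proof.
elim: k => //= k IH.
rewrite (@size_flat _ _ _ _ (n ^ k)) ?size_enum_ord ?expnS // => y _.
by rewrite size_map.
Qed.

Lemma mem_words n (w : word n) k : (w \in words n k) = (size w == k).
Proof.
elim: k w => [|k IH] [|y w] //=.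
  apply/negbTE/negP => /flatten_mapP [z _ /mapP [w' _]] //.
apply/flatten_mapP/idP => [[z _ /mapP [w' Hw' [_ Ew]]]|H].
  by rewrite Ew eqSS -IH.
by exists y; rewrite ?mem_enum // map_f // IH.
Qed.

Lemma count_flat n (P : pred 'I_n) (xs : seq 'I_n) (ws : seq (word n)) :
  count (all P) (flatten [seq [seq y :: w | w <- ws] | y <- xs])
  = count P xs * count (all P) ws.
Proof.
elim: xs => //= y xs IH.
rewrite count_cat IH count_map.
case Py: (P y) => /=.
  by rewrite add1n mulSn; congr (_ + _); apply: eq_count => w /=; rewrite Py.
by rewrite add0n (eq_count (a2 := pred0)) ?count_pred0 // => w /=; rewrite Py.
Qed.

Lemma count_words n (a b : 'I_n) k : a != b ->
  count (all (mem [:: a; b])) (words n k) = 2 ^ k.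
Proof.
move=> Hab; elim: k => //= k IH.
rewrite count_flat IH expnS; congr (_ * _).
have E : count (mem [:: a; b]) (enum 'I_n) = count (predU (pred1 a) (pred1 b)) (enum 'I_n).
  by apply: eq_count => z; rewrite !inE.
have E2 : count (predI (pred1 a) (pred1 b)) (enum 'I_n) = 0.
  rewrite (eq_count (a2 := pred0)) ?count_pred0 // => z /=.
  by apply/negP => /andP [/eqP -> /eqP Eab]; rewrite Eab eqxx in Hab.
have := count_predUI (pred1 a) (pred1 b) (enum 'I_n).
by rewrite E2 addn0 !count_uniq_mem ?enum_uniq // !mem_enum E => ->.
Qed.

Definition cands n c : seq (seq (word n)) :=
  flatten [seq flatten [seq [seq [:: [:: a]; [:: b]; w]
    | w <- [seq w <- words n c | ~~ all (mem [:: a; b]) w]]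
    | b <- [seq b <- enum 'I_n | b != a]] | a <- enum 'I_n].

Lemma map_allF n (a b : 'I_n) (w w' : word n) : all (mem [:: a; b]) w ->
  flatten (map (nth [::] [:: [:: a]; [:: b]; w'])
     (map (fun l => if l == a then 0 else 1) w)) = w.
Proof.
elim: w => //= l w IH /andP[Hl Hw]; rewrite IH //.
case: eqP => [->|/eqP Hla] //=.
by move: Hl; rewrite !inE (negbTE Hla) /= => /eqP ->.
Qed.

Theorem proposition2 (n c : nat) (hn : 2 <= n) (hc : 1 <= c) :
  exists s : seq (seq (word n)),
    [/\ uniq s,
        (forall C : seq (word n), C \in s <-> @UD n [:: 1; 1; c] C)
      & size s = n * (n - 1) * (n ^ c - 2 ^ c)].
Proof.
exists (cands n c); split.
- apply: uniq_flat; last first.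
  + move=> a; apply: uniq_flat; last first.
    * by move=> b; rewrite map_inj_uniq ?filter_uniq ?words_uniq // => w1 w2 [].
    * by rewrite filter_uniq ?enum_uniq.
    by move=> b b' e /mapP [w _ ->] /mapP [w' _ []].
  + exact: enum_uniq.
  move=> a a' e /flatten_mapP [b _ /mapP [w _ ->]] /flatten_mapP [b' _ /mapP [w' _ []]].
  done.
- move=> C; split.
  + move=> /flatten_mapP [a _ /flatten_mapP [b Hb /mapP [w Hw ->]]].
    move: Hb Hw; rewrite !mem_filter mem_words => /andP [Hba _] /andP [Hw /eqP Hs].
    split; first by rewrite /= Hs.
    have [u [x [v [Ew Hu Hx]]]] := decomp Hw.
    rewrite Ew; apply: code3 => //; by rewrite eq_sym.
  + case=> Hs Hc.
    case: C Hs Hc => [|x1 [|x2 [|w [|]]]] //= [Hx1 Hx2 Hw] Hcode.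
    case: x1 Hx1 Hcode => [|a [|]] // _; case: x2 Hx2 => [|b [|]] // _ Hcode.
    have Hab : a != b.
      apply/eqP => Eab; have := Hcode [:: 0] [:: 1] isT isT isT isT.
      by rewrite /= Eab => /(_ erefl).
    have Hall : ~~ all (mem [:: a; b]) w.
      apply/negP => Hall.
      have := Hcode (map (fun l => if l == a then 0 else 1) w) [:: 2].
      rewrite map_allF // /= cats0 => /(_ _ isT _ isT erefl).
      have H1 : map (fun l => if l == a then 0 else 1) w != [::].
        by rewrite -size_eq0 size_map Hw -lt0n.
      have H2 : all (fun i => i < 3) (map (fun l => if l == a then 0 else 1) w).
        by apply/allP => i /mapP [l _ ->]; case: (l == a).
      move=> /(_ H1 H2); case: (w) => [|l [|]] //=.
      by case: (l == a).
    apply/flatten_mapP; exists a; first by rewrite mem_enum.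
    apply/flatten_mapP; exists b; first by rewrite mem_filter eq_sym Hab mem_enum.
    apply: map_f; by rewrite mem_filter Hall mem_words Hw eqxx.
- rewrite -mulnA (@size_flat _ _ _ _ ((n - 1) * (n ^ c - 2 ^ c))) ?size_enum_ord //.
  move=> a _.
  have Hsa : size [seq b <- enum 'I_n | b != a] = n - 1.
    rewrite size_filter; have := count_predC (pred1 a) (enum 'I_n).
    rewrite count_uniq_mem ?enum_uniq // mem_enum => E.
    transitivity (size (enum 'I_n) - 1); last by rewrite size_enum_ord.
    by rewrite -E add1n subn1.
  rewrite (@size_flat _ _ _ _ (n ^ c - 2 ^ c)) ?Hsa // => b.
  rewrite mem_filter => /andP [Hba _].
  rewrite size_map size_filter.
  have := count_predC (all (mem [:: a; b])) (words n c).
  rewrite count_words; last by rewrite eq_sym.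
  by rewrite words_size => <-; rewrite addKn.
Qed.
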